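(* Let $\lambda'$ be a Dyck path of length $2(n-1)$ and $\lambda=U\lambda'D$. Then $P_{\lambda,\lambda_0}=P_{\lambda',\lambda_0}$.
   Context: Paths are words in $\{U,D\}$; a Dyck path (word) has equally many $U$ and $D$ and every prefix has at least as many $U$ as $D$. For a Dyck word $\lambda$: match each $U$ with the $D$ closing it; each matched pair is a chord. $A(\lambda)$ is the rooted plane tree with one edge per chord, the edge of chord $c$ hanging directly below the edge of the innermost chord strictly containing $c$, or from the root if none; siblings ordered left to right. Leaf edges are chords whose $U$ is immediately followed by its $D$; the capacity of a leaf edge (with respect to $\lambda_0$, the all-$U$ word of the same length as $\lambda$) is the number of $D$'s of $\lambda$ strictly left of that $U$. A labelling of Lascoux--Sch\''utzenberger type assigns non-negative integers to edges so that each edge's label is at most the labels of the edges directly below it and each leaf edge's label is at most its capacity. $P_{\lambda,\lambda_0}=\sum q^{\text{sum of labels}}$ over these labellings (equal to $1$ for the empty word). *)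

(* Defs.v *)
From mathcomp Require Import all_boot.
Set Implicit Arguments. Unset Strict Implicit. Unset Printing Implicit Defensive.

Definition U := true.
Definition D := false.

Definition nU (s : seq bool) : nat := count (fun b => b == U) s.
Definition nD (s : seq bool) : nat := count (fun b => b == D) s.

Definition dyck (w : seq bool) : bool :=
  (nU w == nD w) && all (fun t => nD (take t w) <= nU (take t w)) (iota 0 (size w).+1).

Definition letter (w : seq bool) (i : nat) : bool := nth D w i.
Definition isU (w : seq bool) (i : nat) : bool := (i < size w) && (letter w i == U).

Definition seg (w : seq bool) (i j : nat) : seq bool := drop i (take j w).

(* [closes w i j]: the D at position j is the D closing the U at position i,
   i.e. the first position j > i at which the segment [i..j] is balanced. *)
Definition closes (w : seq bool) (i j : nat) : bool :=
  [&& isU w i, i < j, j < size w, letter w j == D,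
      nU (seg w i j.+1) == nD (seg w i j.+1) &
      all (fun t => nD (seg w i t.+1) < nU (seg w i t.+1)) (iota i (j - i))].

(* chord of U at i strictly contains chord of U at j *)
Definition contains (w : seq bool) (i j : nat) : bool :=
  [&& isU w i, isU w j, i < j &
      [exists ci : 'I_(size w), exists cj : 'I_(size w),
         [&& closes w i ci, closes w j cj & cj < ci]]].

(* edge of chord j hangs directly below the edge of chord i:
   i is the innermost chord strictly containing j *)
Definition parent (w : seq bool) (i j : nat) : bool :=
  contains w i j &&
  ~~ [exists k : 'I_(size w), contains w i k && contains w k j].

Definition leaf (w : seq bool) (i : nat) : bool := isU w i && closes w i i.+1.

(* capacity w.r.t. lambda_0 = all-U word of the same length:
   number of D's of w strictly left of position i *)
Definition capacity (w : seq bool) (i : nat) : nat := nD (take i w).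

(* Edges (chords) are indexed by
   the positions i : 'I_(size w) of their U's; g is required to be 0 on non-U
   positions so that labellings of the edges correspond bijectively to such g. *)
Definition LS_labelling (w : seq bool) (g : 'I_(size w) -> nat) : bool :=
  [&& [forall i : 'I_(size w), ~~ isU w i ==> (g i == 0)],
      [forall i : 'I_(size w), forall j : 'I_(size w), parent w i j ==> (g i <= g j)] &
      [forall i : 'I_(size w), leaf w i ==> (g i <= capacity w i)]].

(* Coefficient of q^k in P_{w,lambda_0} = sum over LS labellings of q^(sum of labels):
   the number of LS labellings with label sum k.  Such labellings take values
   <= k, so they are exactly the finite functions into 'I_k.+1 counted here. *)
Definition Pcoef (w : seq bool) (k : nat) : nat :=
  #|[pred f : {ffun 'I_(size w) -> 'I_k.+1} |
     LS_labelling (fun i => nat_of_ord (f i))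
     && ((\sum_(i : 'I_(size w) | isU w i) nat_of_ord (f i)) == k)]|.

(* Main.v *)
Require Import Defs.
From mathcomp Require Import all_boot zify.
Set Implicit Arguments. Unset Strict Implicit. Unset Printing Implicit Defensive.

Notation LL l := (U :: rcons l D).

Lemma nUD s : nU s + nD s = size s.
Proof. by elim: s => //= [[]] s IH /=; rewrite /nU /nD /= in IH *; lia. Qed.

Lemma nU_cat s t : nU (s ++ t) = nU s + nU t. Proof. exact: count_cat. Qed.
Lemma nD_cat s t : nD (s ++ t) = nD s + nD t. Proof. exact: count_cat. Qed.

Lemma dyckP l : dyck l -> nU l = nD l /\ forall t, nD (take t l) <= nU (take t l).
Proof.
move=> /andP [/eqP H1 /allP H2]; split => // t.
case: (leqP t (size l)) => Ht.
  by apply: H2; rewrite mem_iota.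
by rewrite take_oversize ?H1 // ltnW.
Qed.

Lemma sizeL l : size (LL l) = (size l).+2.
Proof. by rewrite /= size_rcons. Qed.

Lemma letterS l i : letter (LL l) i.+1 = letter l i.
Proof.
rewrite /letter /= nth_rcons; case: ltnP => // H.
rewrite nth_default //; by case: eqP.
Qed.

Lemma isUS l i : isU (LL l) i.+1 = isU l i.
Proof.
rewrite /isU letterS sizeL ltnS /letter.
case: (ltnP i (size l)) => H; first by rewrite ltnW.
by rewrite nth_default // andbF.
Qed.

Lemma segS l i j : j <= size l -> seg (LL l) i.+1 j.+1 = seg l i j.
Proof. by move=> H; rewrite /seg /= -cats1 takel_cat. Qed.

Lemma seg0 l t : t <= size l -> seg (LL l) 0 t.+1 = U :: take t l.
Proof. by move=> H; rewrite /seg /= -cats1 takel_cat. Qed.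

Lemma capS l i : i <= size l -> capacity (LL l) i.+1 = capacity l i.
Proof. by move=> H; rewrite /capacity /= -cats1 takel_cat. Qed.

Lemma closes_lt w i j : closes w i j -> (i < j) && (j < size w).
Proof. by case/and5P => _ -> -> _ /andP[]. Qed.

Lemma iotaS i n : iota i.+1 n = map succn (iota i n).
Proof. by rewrite -addn1 addnC iotaDl; apply: eq_map => x; rewrite add1n. Qed.

Lemma closes_last l i : dyck l -> closes (LL l) i.+1 (size l).+1 = false.
Proof.
move=> /dyckP [H1 H2]; apply/negP => /and5P [Hu _ _ _ /andP [/eqP He _]].
move: Hu; rewrite isUS => /andP [Hi _].
move: He; rewrite /seg take_oversize ?sizeL // [drop i.+1 _]/= drop_rcons; last exact: ltnW.
rewrite -cats1 nU_cat nD_cat.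
have -> : nU [:: D] = 0 by []. have -> : nD [:: D] = 1 by [].
have := H2 i; have := nU_cat (take i l) (drop i l); have := nD_cat (take i l) (drop i l).
rewrite cat_take_drop; lia.
Qed.

Lemma closesS l i j : dyck l -> closes (LL l) i.+1 j.+1 = closes l i j.
Proof.
move=> Hd; case: (ltnP i j) => Hij; last first.
  by apply/idP/idP => /closes_lt /andP [H _]; lia.
case: (ltnP j (size l)) => Hj.
  rewrite /closes isUS sizeL !ltnS letterS segS // subSS iotaS all_map (ltnW Hj) Hj.
  congr [&& _, _, _, _, _ & _]; apply: eq_in_all => t; rewrite mem_iota => /andP [_ Ht] /=.
  by rewrite segS //; lia.
have -> : closes l i j = false.
  by apply/negP => /closes_lt /andP [_]; rewrite ltnNge Hj.
case: (ltngtP j (size l)) Hj => // [Hj _|-> _]; last exact: closes_last.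
by apply/negP => /closes_lt /andP [_]; rewrite sizeL ltnS ltnNge Hj.
Qed.
Lemma isU_lt w i : isU w i -> i < size w.
Proof. by case/andP. Qed.

Lemma containsP w i j : reflect [/\ isU w i, isU w j, i < j &
   exists ci cj, [/\ closes w i ci, closes w j cj & cj < ci]] (contains w i j).
Proof.
apply: (iffP and4P) => [[Hi Hj Hij /existsP [ci /existsP [cj /and3P [H1 H2 H3]]]]|].
  by split => //; exists ci, cj.
move=> [Hi Hj Hij [ci [cj [H1 H2 H3]]]]; split => //.
have /andP [_ Hci] := closes_lt H1; have /andP [_ Hcj] := closes_lt H2.
apply/existsP; exists (Ordinal Hci); apply/existsP; exists (Ordinal Hcj).
by apply/and3P.
Qed.

Lemma parentP w i j : reflect (contains w i j /\
   ~ exists k, contains w i k /\ contains w k j) (parent w i j).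
Proof.
apply: (iffP andP) => [[H1 /existsPn H2]|[H1 H2]]; split => //.
  move=> [k [Hk1 Hk2]].
  have /containsP [_ /isU_lt Hk _ _] := Hk1.
  by have := H2 (Ordinal Hk); rewrite /= Hk1 Hk2.
by apply/existsP => [[k /andP [Hk1 Hk2]]]; apply: H2; exists k.
Qed.

Lemma containsS l i j : dyck l -> contains (LL l) i.+1 j.+1 = contains l i j.
Proof.
move=> Hd; apply/containsP/containsP; rewrite !isUS ltnS.
  move=> [Hi Hj Hij [ci [cj [H1 H2 H3]]]]; split => //.
  case: ci H1 H3 => [/closes_lt //|ci]; case: cj H2 => [/closes_lt //|cj].
  rewrite !closesS // => H2 H1 H3; by exists ci, cj.
move=> [Hi Hj Hij [ci [cj [H1 H2 H3]]]]; split => //.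
by exists ci.+1, cj.+1; rewrite !closesS.
Qed.

Lemma contains_gt w i j : contains w i j -> i < j.
Proof. by case/containsP. Qed.

Lemma parentS l i j : dyck l -> parent (LL l) i.+1 j.+1 = parent l i j.
Proof.
move=> Hd; apply/parentP/parentP; rewrite containsS //.
  move=> [H1 H2]; split => // [[k [Hk1 Hk2]]]; apply: H2.
  by exists k.+1; rewrite !containsS.
move=> [H1 H2]; split => // [[[|k] [Hk1 Hk2]]].
  by have := contains_gt Hk1.
by apply: H2; exists k; rewrite -!(containsS _ _ Hd).
Qed.

Lemma leafS l i : dyck l -> leaf (LL l) i.+1 = leaf l i.
Proof. by move=> Hd; rewrite /leaf isUS closesS. Qed.

Lemma LSP w (g : 'I_(size w) -> nat) : reflect
  [/\ forall i : 'I_(size w), ~~ isU w i -> g i = 0,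
      forall i j : 'I_(size w), parent w i j -> g i <= g j &
      forall i : 'I_(size w), leaf w i -> g i <= capacity w i] (@LS_labelling w g).
Proof.
apply: (iffP and3P) => [[/forallP H1 H2 /forallP H3]|[H1 H2 H3]]; split.
- by move=> i Hi; apply/eqP; exact: (implyP (H1 i) Hi).
- by move=> i j Hij; move/forallP: H2 => /(_ i) /forallP /(_ j) /implyP; apply.
- by move=> i Hi; exact: (implyP (H3 i) Hi).
- by apply/forallP => i; apply/implyP => /H1 ->.
- by apply/forallP => i; apply/forallP => j; apply/implyP => /H2.
- by apply/forallP => i; apply/implyP => /H3.
Qed.

Lemma contains_le w (g : 'I_(size w) -> nat) : @LS_labelling w g ->
  forall i j : 'I_(size w), contains w i j -> g i <= g j.
Proof.
move=> /LSP [_ Hp _].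
suff H : forall n (i j : 'I_(size w)), j - i < n -> contains w i j -> g i <= g j.
  by move=> i j; apply: (H (j - i).+1).
elim=> // n IH i j Hn Hc.
case: (boolP (parent w i j)) => [/Hp //|].
rewrite /parent Hc /= negbK => /existsP [k /andP [Hk1 Hk2]].
have Hik := contains_gt Hk1; have Hkj := contains_gt Hk2.
apply: (@leq_trans (g k)).
  by apply: IH => //=; lia.
by apply: IH => //=; lia.
Qed.
Lemma nU_L l : nU (LL l) = (nU l).+1.
Proof. rewrite /nU -cats1 [LHS]/= count_cat /=; lia. Qed.
Lemma nD_L l : nD (LL l) = (nD l).+1.
Proof. rewrite /nD -cats1 [LHS]/= count_cat /=; lia. Qed.

Lemma closes0 l : dyck l -> closes (LL l) 0 (size l).+1.
Proof.
move=> Hd; have [H1 H2] := dyckP Hd.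
apply/and5P; split.
- by [].
- by [].
- by rewrite sizeL.
- by rewrite letterS /letter nth_default.
apply/andP; split.
  by rewrite /seg take_oversize ?sizeL // drop0 nU_L nD_L H1.
apply/allP => t; rewrite subn0 mem_iota add0n => /andP [_ Ht].
rewrite seg0 //.
have -> : nD (U :: take t l) = nD (take t l) by [].
have -> : nU (U :: take t l) = (nU (take t l)).+1 by [].
by rewrite ltnS.
Qed.

Lemma seg1 w i : i < size w -> seg w i i.+1 = [:: nth D w i].
Proof.
move=> H; rewrite /seg (take_nth D) // drop_rcons ?size_take ?H //.
by rewrite drop_oversize // size_take H.
Qed.

Lemma seg2 w i : i.+1 < size w -> seg w i i.+2 = [:: nth D w i; nth D w i.+1].
Proof.
move=> H; have H' : i < size w by apply: ltnW.
rewrite /seg (take_nth D) // drop_rcons; last by rewrite size_take H.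
by rewrite -/(seg w i i.+1) seg1.
Qed.

Lemma count_take_find (a : pred bool) s n : n <= find a s -> count a (take n s) = 0.
Proof.
elim: s n => [|x s IH] [|n] //=.
by case: (a x) => //= Hn; rewrite IH.
Qed.

Lemma first_leaf l : dyck l -> 0 < size l ->
  exists q, [/\ q.+1 < size l, leaf l q & capacity l q = 0].
Proof.
move=> Hd Hs; have [H1 H2] := dyckP Hd.
set a := fun b : bool => b == D.
have Hhas : has a l.
  by rewrite has_count; have := nUD l; rewrite -/(nD l); lia.
have Hp := Hhas; rewrite has_find in Hp.
have Hnp := nth_find D Hhas.
case Ep : (find a l) Hp Hnp => [|q] Hp Hnp.
  have := H2 1; rewrite (take_nth D) // take0.
  by rewrite /a in Hnp; move/eqP: Hnp => ->.
have Hq : forall t, t <= q -> nth D l t = U.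
  move=> t Ht; have := before_find D (a:=a) (s:=l) (i:=t).
  by rewrite Ep ltnS Ht /a => /(_ isT); case: (nth D l t).
have HqU : nth D l q = U by apply: Hq.
move/eqP: Hnp => HpD.
exists q; split => //.
- apply/andP; split; first by rewrite /isU /letter HqU andbT ltnW.
  apply/and5P; split => //.
  + by rewrite /isU /letter HqU andbT ltnW.
  + by rewrite /letter HpD.
  apply/andP; split; first by rewrite seg2 // HqU HpD.
  by rewrite subSnn /= seg1 ?HqU // ltnW.
- by rewrite /capacity /nD count_take_find // Ep.
Qed.
Lemma sh_proof l (j : 'I_(size l)) : j.+1 < size (LL l).
Proof. rewrite sizeL ltnS; exact: ltnW (ltn_ord j). Qed.

Definition sh l (j : 'I_(size l)) : 'I_(size (LL l)) := Ordinal (sh_proof j).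

Definition Phi l k (f : {ffun 'I_(size (LL l)) -> 'I_k.+1}) : {ffun 'I_(size l) -> 'I_k.+1} :=
  [ffun j => f (sh j)].

Definition ext l k (g : {ffun 'I_(size l) -> 'I_k.+1}) : {ffun 'I_(size (LL l)) -> 'I_k.+1} :=
  [ffun i : 'I_(size (LL l)) => if (i : nat) == 0 then ord0
                                else odflt ord0 (omap g (insub (i : nat).-1))].

Lemma ext_sh l k (g : {ffun 'I_(size l) -> 'I_k.+1}) j : ext g (sh j) = g j.
Proof. by rewrite ffunE /= valK. Qed.

Lemma ext_val l k (g : {ffun 'I_(size l) -> 'I_k.+1}) (i : 'I_(size (LL l))) :
  (i : nat) = 0 \/ (i : nat) = (size l).+1 -> ext g i = ord0.
Proof.
move=> H; rewrite ffunE; case: H => -> //=.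
by case: insubP => // u; rewrite ltnn.
Qed.

Lemma ord_cases l (i : 'I_(size (LL l))) :
  [\/ (i : nat) = 0, (i : nat) = (size l).+1 | exists j : 'I_(size l), i = sh j].
Proof.
case: i => [[|t] Ht] /=; first by constructor 1.
case: (ltngtP t (size l)) => H.
- by constructor 3; exists (Ordinal H); apply: val_inj.
- by have := Ht; rewrite sizeL; lia.
- by constructor 2; rewrite H.
Qed.

Lemma sum_ext l k (g : {ffun 'I_(size l) -> 'I_k.+1}) :
  \sum_(i : 'I_(size (LL l)) | isU (LL l) i) (ext g i : nat) =
  \sum_(j : 'I_(size l) | isU l j) (g j : nat).
Proof.
pose G' t := if (insub t : option 'I_(size l)) is Some j then (g j : nat) else 0.
pose F' t := if t is t'.+1 then G' t' else 0.
have HF : forall i : 'I_(size (LL l)), (ext g i : nat) = F' i.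
  move=> [[|t] Ht]; rewrite ffunE //=.
  by rewrite /G'; case: (insub t).
rewrite (eq_bigr (fun i : 'I_(size (LL l)) => F' i)); last by move=> i _; apply: HF.
rewrite -(big_mkord (fun i => isU (LL l) i) F') sizeL.
rewrite big_mkcond big_nat_recl // big_nat_recr //=.
have -> : G' (size l) = 0 by rewrite /G'; case: insubP => // u; rewrite ltnn.
rewrite if_same add0n addn0 big_mkord [RHS]big_mkcond /=.
apply: eq_bigr => j _; by rewrite isUS /G' valK.
Qed.
Lemma val_sh l (j : 'I_(size l)) : (sh j : nat) = j.+1.
Proof. by []. Qed.

Lemma root_zero l (g : 'I_(size (LL l)) -> nat) (i : 'I_(size (LL l))) :
  dyck l -> @LS_labelling (LL l) g -> (i : nat) = 0 -> g i = 0.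
Proof.
move=> Hd HLS Hi; have HLS' := HLS; move/LSP: HLS' => [_ _ H3].
case: (posnP (size l)) => [/size0nil El | Hs].
  have Hleaf : leaf (LL l) i by rewrite Hi El.
  have := H3 i Hleaf; rewrite /capacity Hi take0 (_ : nD [::] = 0) //; lia.
have [q [Hq Hleaf Hcap]] := first_leaf Hd Hs.
have Hq' : q.+1 < size (LL l) by rewrite sizeL; lia.
pose oq := Ordinal Hq'.
have Hc : contains (LL l) i oq.
  apply/containsP; split.
  - by rewrite Hi.
  - by rewrite /= isUS; case/andP: Hleaf.
  - by rewrite Hi.
  exists (size l).+1, q.+2; split.
  - by rewrite Hi; apply: closes0.
  - by rewrite /= closesS //; case/andP: Hleaf.
  - by [].
have := contains_le HLS Hc.
have := H3 oq; rewrite /= leafS // capS; last by lia.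
rewrite Hcap => /(_ Hleaf); lia.
Qed.

Lemma LS_ext l k (g : {ffun 'I_(size l) -> 'I_k.+1}) : dyck l ->
  LS_labelling (fun j => nat_of_ord (g j)) ->
  LS_labelling (fun i => nat_of_ord (ext g i)).
Proof.
move=> Hd /LSP [H1 H2 H3]; apply/LSP; split.
- move=> i; case: (ord_cases i) => [Hi|Hi|[j ->]].
  + by rewrite ext_val //; left.
  + by rewrite ext_val //; right.
  + by rewrite ext_sh val_sh isUS; apply: H1.
- move=> i j; case: (ord_cases i) => [Hi|Hi|[a ->]].
  + by rewrite ext_val //; left.
  + by rewrite ext_val //; right.
  case: (ord_cases j) => [Hj|Hj|[b ->]].
  + by move=> /parentP [/contains_gt]; rewrite Hj.
  + move=> /parentP [/containsP [_]]; rewrite Hj isUS => /isU_lt; rewrite ltnn //.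
  + by rewrite !ext_sh !val_sh parentS //; apply: H2.
- move=> i; case: (ord_cases i) => [Hi|Hi|[j ->]].
  + by rewrite ext_val //; left.
  + by rewrite ext_val //; right.
  + rewrite ext_sh val_sh leafS // capS; last exact: ltnW (ltn_ord j).
    exact: H3.
Qed.

Lemma LS_Phi l k (f : {ffun 'I_(size (LL l)) -> 'I_k.+1}) : dyck l ->
  LS_labelling (fun i => nat_of_ord (f i)) ->
  LS_labelling (fun j => nat_of_ord (Phi f j)).
Proof.
move=> Hd /LSP [H1 H2 H3]; apply/LSP; split.
- by move=> j Hj; rewrite ffunE; apply: H1; rewrite val_sh isUS.
- by move=> a b Hab; rewrite !ffunE; apply: H2; rewrite !val_sh parentS.
- move=> j Hj; rewrite ffunE -capS; last exact: ltnW (ltn_ord j).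
  by apply: H3; rewrite val_sh leafS.
Qed.

Lemma ext_inj l k : injective (@ext l k).
Proof.
move=> g1 g2 E; apply/ffunP => j.
by rewrite -(ext_sh g1) -(ext_sh g2) E.
Qed.

Lemma Phi_ext l k (f : {ffun 'I_(size (LL l)) -> 'I_k.+1}) : dyck l ->
  LS_labelling (fun i => nat_of_ord (f i)) -> f = ext (Phi f).
Proof.
move=> Hd HLS; apply/ffunP => i.
case: (ord_cases i) => [Hi|Hi|[j ->]].
- rewrite ext_val; last by left.
  by apply: val_inj => /=; apply: (root_zero (g := fun i => nat_of_ord (f i))).
- rewrite ext_val; last by right.
  move/LSP: HLS => [H1 _ _]; apply: val_inj => /=; apply: H1.
  by rewrite Hi isUS /isU ltnn.
- by rewrite ext_sh ffunE.
Qed.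

Theorem mainTheorem10 (n : nat) (lam' : seq bool) :
  dyck lam' -> size lam' = 2 * (n - 1) ->
  forall k : nat, Pcoef (U :: rcons lam' D) k = Pcoef lam' k.
Proof.
move=> Hd _ k; rewrite /Pcoef.
set PB := [pred g : {ffun 'I_(size lam') -> 'I_k.+1} |
     LS_labelling (fun i => nat_of_ord (g i))
     && ((\sum_(i : 'I_(size lam') | isU lam' i) nat_of_ord (g i)) == k)].
rewrite -(card_imset PB (@ext_inj lam' k)).
apply: eq_card => f; rewrite !inE.
apply/idP/imsetP.
  move=> /andP [HLS Hsum].
  have Ef := Phi_ext Hd HLS.
  exists (Phi f) => //.
  rewrite inE LS_Phi //=.
  by rewrite Ef sum_ext in Hsum.
move=> [g Hg ->]; move: Hg; rewrite inE => /andP [HLS Hsum].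
by rewrite LS_ext // sum_ext.
Qed.
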